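(* Let $(X,T),(Y,S)$ be $1$-step shifts of finite type over a finite alphabet $\mathcal{A}$, let $F:\mathcal{A}^2\to\mathbb{R}$ and $f(x,y)=F(x(0),y(0))$. Let $(C_n)_{n\ge1}$ be a non-increasing sequence of nonnegative reals converging to $C$. Then $Y_{f,C}=\bigcap_{n\ge1}Y_{f,C_n}$. In particular, if $Y_{f,C_n}\neq\emptyset$ for all $n$, then $Y_{f,C}\neq\emptyset$.
   Context: $\mathcal{A}^{\mathbb{Z}}$ carries the product of discrete topologies and the left shift $(Tx)(j)=x(j+1)$. A shift is a nonempty compact $X\subseteq\mathcal{A}^{\mathbb{Z}}$ with $TX=X$; it is a $1$-step shift of finite type if there is $\mathcal{F}\subseteq\mathcal{A}^{\{0,1\}}$ with $X=\{x:(T^jx)|_{[0,1]}\notin\mathcal{F}\ \forall j\in\mathbb{Z}\}$. $\mathbb{S}_{[a,b]}f(x,y)=\sum_{j=a}^bf(T^jx,S^jy)$. For integers $a\le b$: $P_{a,b}=\{(v_1,v_2)\in\mathcal{A}^2:\exists x\in X,\ x(a)=v_1,x(b)=v_2\}$; for $(v_1,v_2)\in P_{a,b}$, $y\in Y$: $H_{a,b,v_1,v_2}(y)=\min\{\mathbb{S}_{[a,b]}f(x,y):x\in X,x(a)=v_1,x(b)=v_2\}$. For $C\ge0$, $Y_{f,C}$ is the set of $y\in Y$ such that for all integers $a\le b$ there is $(v_1,v_2)\in P_{a,b}$ with $H_{a,b,v_1,v_2}(y)\ge\max\{H_{a,b,v_1,v_2}(y'):y'\in Y,\ y'|_{\mathbb{Z}\setminus[a,b]}=y|_{\mathbb{Z}\setminus[a,b]}\}-C$.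 *)

(* Defs.v *)
From HB Require Import structures.
From mathcomp Require Import all_boot all_order all_algebra.
From mathcomp Require Import all_classical all_reals all_analysis.
Set Implicit Arguments. Unset Strict Implicit. Unset Printing Implicit Defensive.
Import Order.TTheory GRing.Theory Num.Theory.
Local Open Scope classical_set_scope.
Local Open Scope ring_scope.

Section Defs.
Variable A : finType.

Definition conf := int -> A.

Definition shiftk (k : int) (x : conf) : conf := fun j => x (j + k).

(* 1-step shift of finite type: nonempty and defined by forbidden 2-blocks
   (such a set is automatically compact and shift-invariant). *)
Definition is_1step_SFT (X : set conf) : Prop :=
  X !=set0 /\
  exists Fb : {pred A * A},
    forall x, X x <-> (forall j : int, ~~ Fb (x j, x (j + 1))).

Variable R : realType.

Definition fF (F : A -> A -> R) (x y : conf) : R := F (x 0) (y 0).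

Definition birk (f : conf -> conf -> R) (a b : int) (x y : conf) : R :=
  \sum_(i < (absz (b - a)).+1) f (shiftk (a + i%:Z) x) (shiftk (a + i%:Z) y).

Definition Pab (X : set conf) (a b : int) : set (A * A) :=
  [set v | exists2 x, X x & x a = v.1 /\ x b = v.2].

(* H_{a,b,v1,v2}(y): min (taken as inf, it is attained) *)
Definition Hab (X : set conf) (f : conf -> conf -> R) (a b : int)
    (v : A * A) (y : conf) : R :=
  inf [set birk f a b x y | x in [set x | X x /\ x a = v.1 /\ x b = v.2]].

Definition agree_out (a b : int) (y y' : conf) : Prop :=
  forall j : int, (j < a \/ b < j) -> y' j = y j.

Definition YfC (X Y : set conf) (f : conf -> conf -> R) (C : R) : set conf :=
  [set y | Y y /\
    forall a b : int, a <= b ->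
      exists2 v, Pab X a b v &
        Hab X f a b v y >=
          sup [set Hab X f a b v y' | y' in [set y' | Y y' /\ agree_out a b y y']] - C].

End Defs.

(* Main.v *)
Require Import Defs.
From HB Require Import structures.
From mathcomp Require Import all_boot all_order all_algebra.
From mathcomp Require Import all_classical all_reals all_analysis.
From mathcomp Require Import zify ring lra.
Import Order.TTheory GRing.Theory Num.Theory.
Import numFieldNormedType.Exports.
Local Open Scope classical_set_scope.
Local Open Scope ring_scope.
Lemma pigeon (T : finType) (Q : T -> nat -> Prop) :
  (forall v m n, (n <= m)%N -> Q v m -> Q v n) ->
  (forall n, exists v, Q v n) -> exists v, forall n, Q v n.
Proof.
move=> mono H; apply: contrapT => /forallNP nH.
have : forall v, exists n, ~ Q v n by move=> v; apply/existsNP; exact: nH.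
case/choice => g Hg.
have [v Hv] := H (\max_(v : T) g v).
apply: (Hg v); apply: mono Hv; exact: (leq_bigmax v).
Qed.

Lemma cvg_eps (R : realType) (Cs : nat -> R) C : Cs @ \oo --> C ->
  forall e, 0 < e -> exists N, forall m, (N <= m)%N -> `|C - Cs m| < e.
Proof.
move/cvgrPdist_lt => H e e0; have := H e e0; case => N _ HN; exists N => m; apply HN.
Qed.

Section S.
Variables (A : finType) (R : realType) (X Y : set (conf A)) (F : A -> A -> R).

Lemma birk_local a b x w w' : a <= b ->
  (forall j, a <= j <= b -> w j = w' j) ->
  birk (fF F) a b x w = birk (fF F) a b x w'.
Proof.
move=> ab H; rewrite /birk; apply: eq_bigr => i _; rewrite /fF /shiftk; congr F.
apply: H; have := ltn_ord i; lia.
Qed.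

Lemma Hab_local a b v w w' : a <= b ->
  (forall j, a <= j <= b -> w j = w' j) ->
  Hab X (fF F) a b v w = Hab X (fF F) a b v w'.
Proof.
move=> ab H; rewrite /Hab; congr inf; apply/seteqP; split => _ [x Hx <-]; exists x => //.
  by apply: birk_local => // j /H ->.
exact: birk_local.
Qed.

Section SFT.
Variables (Fb : {pred A * A}) (HY : forall x, Y x <-> forall j : int, ~~ Fb (x j, x (j + 1))).

Lemma img_local a b v w1 w2 :
  a <= b -> Y w2 -> (forall j, a - 1 <= j <= b + 1 -> w1 j = w2 j) ->
  [set Hab X (fF F) a b v y' | y' in [set y' | Y y' /\ agree_out a b w1 y']] `<=`
  [set Hab X (fF F) a b v y' | y' in [set y' | Y y' /\ agree_out a b w2 y']].
Proof.
move=> ab Y2 H _ [y' [Yy' ag] <-].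
pose u' := fun j => if (a <= j <= b) then y' j else w2 j.
have ein : forall j, a - 1 <= j <= b + 1 -> u' j = y' j.
  move=> j hj; rewrite /u'; case: ifP => // /negbT hn.
  rewrite -H; last lia.
  symmetry; apply: ag; lia.
have eout : forall j, j < a \/ b < j -> u' j = w2 j.
  move=> j hj; rewrite /u' ifF //; apply/negbTE; lia.
exists u'; last first.
  apply: Hab_local => // j aj; apply: ein; lia.
split; last by move=> j hj; apply: eout.
apply/HY => j.
have [Hj|Hj] : (a - 1 <= j <= b) \/ (j < a - 1 \/ b < j) by lia.
  rewrite !ein; try lia; exact: (HY y').1 Yy' j.
rewrite !eout; try lia; exact: (HY w2).1 Y2 j.
Qed.

Lemma YfC_closed c y :
  (forall N : nat, exists2 u, YfC X Y (fF F) c u &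
     forall j : int, - (N%:Z) < j < N%:Z -> u j = y j) ->
  YfC X Y (fF F) c y.
Proof.
move=> H.
have Yy : Y y.
  apply/HY => j. have [u [Yu _] Hu] := H (absz j + 2)%N.
  rewrite -!Hu; try lia; exact: (HY u).1 Yu j.
split => // a b ab.
have [u [Yu Hu] Hw] := H (absz a + absz b + 2)%N.
have [v Pv Hv] := Hu a b ab.
exists v => //.
have eqs : [set Hab X (fF F) a b v y' | y' in [set y' | Y y' /\ agree_out a b y y']] =
  [set Hab X (fF F) a b v y' | y' in [set y' | Y y' /\ agree_out a b u y']].
  apply/seteqP; split; apply: img_local => // j hj; rewrite Hw //; lia.
rewrite eqs (@Hab_local a b v y u) //.
move=> j hj; rewrite Hw //; lia.
Qed.
End SFT.
End S.

Lemma mono_YfC (A : finType) (R : realType) (X Y : set (conf A)) (f : conf A -> conf A -> R) c c' :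
  c <= c' -> YfC X Y f c `<=` YfC X Y f c'.
Proof.
move=> cc y [Yy H]; split => // a b ab; have [v Pv Hv] := H a b ab; exists v => //.
move: Hv; set s := sup _; lra.
Qed.

Theorem lemma3p7 (A : finType) (R : realType) (X Y : set (conf A))
  (F : A -> A -> R) (Cs : nat -> R) (C : R) :
  is_1step_SFT X -> is_1step_SFT Y ->
  (forall m n : nat, (1 <= m <= n)%N -> Cs n <= Cs m) ->
  (forall n : nat, (1 <= n)%N -> 0 <= Cs n) ->
  Cs @ \oo --> C ->
  YfC X Y (fF F) C = \bigcap_(n in [set n : nat | (1 <= n)%N]) YfC X Y (fF F) (Cs n)
  /\ ((forall n : nat, (1 <= n)%N -> YfC X Y (fF F) (Cs n) !=set0) ->
      YfC X Y (fF F) C !=set0).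
Proof.
move=> _ [_ [Fb HY]] mono pos cvg.
have eps := cvg_eps _ _ _ cvg.
have CleCs : forall n, (1 <= n)%N -> C <= Cs n.
  move=> n n1; apply/ler_addgt0Pr => e e0.
  have [N HN] := eps e e0.
  have := HN (maxn N n) (leq_maxl _ _).
  have : Cs (maxn N n) <= Cs n by apply: mono; rewrite n1 leq_maxr.
  move=> h1 /ltr_normlP [h2 h3]; lra.
have part1 : YfC X Y (fF F) C = \bigcap_(n in [set n : nat | (1 <= n)%N]) YfC X Y (fF F) (Cs n).
  apply/seteqP; split.
    move=> y Hy n n1; apply: mono_YfC Hy; exact: CleCs.
  move=> y Hy; have [Yy _] := Hy 1%N (erefl). split=> // a b ab.
  have [v Hv] : exists v, forall n, (Pab X a b v /\
     sup [set Hab X (fF F) a b v y' | y' in [set y' | Y y' /\ agree_out a b y y']] - Cs n.+1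
       <= Hab X (fF F) a b v y).
    apply: pigeon.
  - move=> v m n nm [P1 h]; split => //; apply: le_trans h.
    have := mono n.+1 m.+1 nm; lra.
  - move=> n; have [_ H] := Hy n.+1 erefl; have [v P h] := H a b ab; exists v; split => //.
  exists v; first by case: (Hv 0%N).
  apply/ler_addgt0Pr => e e0.
  have [N HN] := eps e e0.
  have [_ h] := Hv N.
  have /ltr_normlP [h2 h3] := HN N.+1 (leqnSn _).
  lra.
split => //.
move=> ne.
pose Sn n := YfC X Y (fF F) (Cs n.+1).
have nest : forall n m, (n <= m)%N -> Sn m `<=` Sn n.
  move=> n m nm; apply: mono_YfC; exact: mono.
pose good N z := forall n, exists2 u, Sn n u &
  forall j : int, -(N%:Z) < j < N%:Z -> u j = z j.
have step : forall N z, good N z -> exists z',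
    (forall j : int, -(N%:Z) < j < N%:Z -> z' j = z j) /\ good N.+1 z'.
  move=> N z gz.
  have [[c d] Hp] : exists p : A * A, forall n, exists2 u, Sn n u &
     (forall j : int, -(N%:Z) < j < N%:Z -> u j = z j) /\ u (- N%:Z) = p.1 /\ u N%:Z = p.2.
    apply: pigeon.
  - move=> p m n nm [u Su hu]; exists u => //; exact: nest Su.
  - move=> n; have [u Su hu] := gz n; exists (u (-N%:Z), u N%:Z); exists u => //.
  exists (fun j => if j == N%:Z then d else if j == - N%:Z then c else z j); split.
    move=> j hj; case: eqP => [?|_]; first lia.
    case: eqP => [?|_] //; lia.
  move=> n; have [u Su [hu [hc hd]]] := Hp n; exists u => // j hj /=.
  case: eqP => [->|h1] //. case: eqP => [->|h2] //. apply: hu; lia.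
have [z0 Sz0] := ne 1%N erefl.
have good0 : good 0%N z0.
  move=> n; have [u Su] := ne n.+1 erefl; exists u => // j; lia.
have : forall p : nat * conf A, exists z', good p.1 p.2 ->
    (forall j : int, -(p.1%:Z) < j < p.1%:Z -> z' j = p.2 j) /\ good p.1.+1 z'.
  move=> [N z]; case: (pselect (good N z)) => [g|ng]; last by exists z.
  have [z' h] := step N z g; by exists z'.
case/choice => nx Hnx.
pose zs := fix zs n := if n is n'.+1 then nx (n', zs n') else z0.
have gzs : forall N, good N (zs N).
  elim => // N IH; exact: ((Hnx (N, zs N)) IH).2.
have chain : forall N M, (N <= M)%N -> forall j : int, -(N%:Z) < j < N%:Z -> zs M j = zs N j.
  move=> N; elim => [|M IH] NM j hj; first by move: NM; rewrite leqn0 => /eqP ->.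
  move: NM; rewrite leq_eqVlt => /orP [/eqP ->//|NM].
  rewrite /= ((Hnx (M, zs M)) (gzs M)).1 /=; last lia.
  exact: IH.
pose y := fun j : int => zs (absz j).+1 j.
exists y. rewrite part1 => n n1.
apply: (@YfC_closed _ _ _ _ _ Fb HY) => N.
have [u Su Hu] := gzs N (n.-1).
exists u; first by move: Su; rewrite /Sn prednK.
move=> j hj; rewrite Hu // /y; apply: chain; lia.
Qed.
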